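(* Let $\phi\in C^3((0,\infty))$, $\eta=\phi'$ and $\hat\eta(r)=\eta(r)+2\eta(2r)$, and suppose there are constants $0<a_0<\tilde r_1<\tilde r_2<2a_0$ and $a_1>a_0$ such that: $\eta'(r)>0$ for $0<r<\tilde r_1$ and $\eta'(r)<0$ for $r>\tilde r_1$; $\eta''(r)<0$ for $0<r<\tilde r_2$ and $\eta''(r)>0$ for $r>\tilde r_2$; $\hat\eta(r)<0$ for $0<r<a_0$ and $\hat\eta(r)>0$ for $r>a_0$; $\hat\eta'(r)>0$ for $0<r<a_1$ and $\hat\eta'(r)<0$ for $r>a_1$. Let $N,K$ be positive integers with $K<N-1$. For $\mathbf r=(r_{-N},\dots,r_N)\in(0,\infty)^{2N+1}$ define forces $F^{QCF}_j(\mathbf r)$, $j=-N,\dots,N+1$, by $F^{QCF}_{-N}(\mathbf r)=\eta(r_{-N})+2\eta(2r_{-N})$; $F^{QCF}_j(\mathbf r)=[\eta(r_j)+2\eta(2r_j)]-[\eta(r_{j-1})+2\eta(2r_{j-1})]$ for $-N+1\le j\le -K$ and for $K+1\le j\le N$; $F^{QCF}_j(\mathbf r)=[\eta(r_j)+\eta(r_j+r_{j+1})]-[\eta(r_{j-1})+\eta(r_{j-1}+r_{j-2})]$ for $-K+1\le j\le K$; $F^{QCF}_{N+1}(\mathbf r)=-[\eta(r_N)+2\eta(2r_N)]$. Let $f_{-N},\dots,f_{N+1}\in\mathbb R$ be anti-symmetric, i.e. $f_{j+1}=-f_{-j}$ for $j=0,\dots,N$, and set $\Phi_j=-\sum_{i=-N}^{j}f_i$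 for $j=-N,\dots,N$. Suppose $r_L,r_U$ satisfy $\tilde r_2/2<r_L<r_U$ and $\eta'(r_U)+12\eta'(2r_L)\ge0$. If $\eta(r_L)+4\eta(2r_L)-2\eta(2r_U)<\Phi_j<\eta(r_U)+4\eta(2r_U)-2\eta(2r_L)$ for $j=-N,\dots,N$, then the equilibrium equations $F^{QCF}_j(\mathbf r)+f_j=0$, $j=-N,\dots,N+1$, have a unique symmetric solution $\mathbf r$ in $\Omega=(r_L,r_U)^{2N+1}$.
   Context: $F^{QCF}_j$ is the force-based quasicontinuum force on the $j$-th representative atom of a one-dimensional chain, expressed in terms of the lattice spacings $r_j$ ($-K+1\le j\le K$ atomistic, the rest continuum), with nearest and next-nearest neighbour pair interactions given by $\phi$; $f_j$ are external forces. A vector $\mathbf r$ is symmetric if $r_{-j}=r_j$ for $j=1,\dots,N$. *)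

(* Defs.v *)
From Stdlib Require Import Reals Lra Lia ZArith.
From Coquelicot Require Import Coquelicot.
Open Scope R_scope.

Definition eta_hat (eta : R -> R) (x : R) : R := eta x + 2 * eta (2 * x).

(* Force-based QC forces F^{QCF}_j, j = -N .. N+1, lattice spacings r : Z -> R
   (only r_{-N}, ..., r_N are used). *)
Definition F_QCF (eta : R -> R) (N K : Z) (r : Z -> R) (j : Z) : R :=
  if (j =? - N)%Z then eta_hat eta (r (- N)%Z)
  else if (j =? N + 1)%Z then - eta_hat eta (r N)
  else if ((- K + 1 <=? j)%Z && (j <=? K)%Z)%bool then
    (eta (r j) + eta (r j + r (j + 1)%Z))
    - (eta (r (j - 1)%Z) + eta (r (j - 1)%Z + r (j - 2)%Z))
  else eta_hat eta (r j) - eta_hat eta (r (j - 1)%Z).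

Definition Phi (N : Z) (f : Z -> R) (j : Z) : R :=
  - sum_f_R0 (fun k => f (Z.of_nat k - N)%Z) (Z.to_nat (j + N)).

Definition symmetric_vec (N : Z) (r : Z -> R) : Prop :=
  forall j : Z, (1 <= j <= N)%Z -> r (- j)%Z = r j.

(* Main.v *)
Require Import Defs.
From Stdlib Require Import Reals ZArith.
From Coquelicot Require Import Coquelicot.
From Stdlib Require Import Lra Lia ClassicalEpsilon FunctionalExtensionality.
Open Scope R_scope.

Lemma cont_of_derive (f df : R -> R) x : is_derive f x (df x) -> continuity_pt f x.
Proof.
  intro H. apply continuity_pt_filterlim.
  apply (ex_derive_continuous (K:=R_AbsRing) (V:=R_NormedModule) f x). exists (df x). exact H.
Qed.

Lemma mvt (f df : R -> R) a b : 0 < a -> a <= b ->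
  (forall x, 0 < x -> is_derive f x (df x)) ->
  exists c, a <= c <= b /\ f b - f a = df c * (b - a).
Proof.
  intros Ha Hab Hd.
  destruct (MVT_gen f a b df) as [c [Hc E]].
  - intros x Hx. apply Hd. rewrite Rmin_left in Hx by lra. lra.
  - intros x Hx. apply cont_of_derive with df. apply Hd. rewrite Rmin_left in Hx by lra. lra.
  - rewrite Rmin_left in Hc by lra. rewrite Rmax_right in Hc by lra. eauto.
Qed.

Lemma lip_cont (g : R -> R) x L : 0 < L ->
  (forall u, Rabs (g u - g x) <= L * Rabs (u - x)) -> continuity_pt g x.
Proof.
  intros HL H. unfold continuity_pt, continue_in, limit1_in, limit_in.
  intros eps Heps. exists (eps / L). split.
  - apply Rdiv_lt_0_compat; lra.
  - intros u [_ Hu]. simpl in *. unfold R_dist in *.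
    specialize (H u). apply Rle_lt_trans with (1 := H).
    apply Rmult_lt_reg_r with (/ L). apply Rinv_0_lt_compat; lra.
    replace (L * Rabs (u - x) * / L) with (Rabs (u - x)) by (field; lra).
    exact Hu.
Qed.

Definition clampR (a b x : R) := Rmax a (Rmin b x).

Lemma clamp_lip a b u v : a <= b -> Rabs (clampR a b u - clampR a b v) <= Rabs (u - v).
Proof.
  intros Hab. unfold clampR, Rmax, Rmin.
  repeat destruct Rle_dec; unfold Rabs; repeat destruct Rcase_abs; lra.
Qed.

Lemma clamp_in a b x : a <= b -> a <= clampR a b x <= b.
Proof. intros. unfold clampR, Rmax, Rmin. repeat destruct Rle_dec; lra. Qed.

Lemma clamp_id a b x : a <= x <= b -> clampR a b x = x.
Proof. intros. unfold clampR, Rmax, Rmin. repeat destruct Rle_dec; lra. Qed.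

Lemma IVT_loc (f : R -> R) a b y : a <= b ->
  (forall x, a <= x <= b -> continuity_pt f x) -> f a <= y <= f b ->
  exists x, a <= x <= b /\ f x = y.
Proof.
  intros Hab Hc Hy.
  set (h := fun x => f (clampR a b x)).
  assert (Hh : continuity h).
  { intro x. unfold h.
    apply (continuity_pt_comp (clampR a b) f x).
    - apply lip_cont with 1; [lra|]. intro u. rewrite Rmult_1_l. now apply clamp_lip.
    - apply Hc. now apply clamp_in. }
  destruct (IVT_gen h a b y Hh) as [x [Hx E]].
  - unfold h. rewrite !clamp_id by lra.
    rewrite Rmin_left by lra. rewrite Rmax_right by lra. lra.
  - rewrite Rmin_left in Hx by lra. rewrite Rmax_right in Hx by lra.
    exists x. split; auto. unfold h in E. rewrite clamp_id in E by lra. exact E.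
Qed.

Section Slopes.
Variables (eta eta1 eta2 : R -> R) (rt1 rt2 rL rU : R).
Hypothesis Heta : forall x, 0 < x -> is_derive eta x (eta1 x).
Hypothesis Heta1 : forall x, 0 < x -> is_derive eta1 x (eta2 x).
Hypothesis H1b : forall x, x > rt1 -> eta1 x < 0.
Hypothesis H2a : forall x, 0 < x < rt2 -> eta2 x < 0.
Hypothesis H2b : forall x, x > rt2 -> eta2 x > 0.
Hypothesis Hrt : 0 < rt1 < rt2.
Hypothesis HrL : rt2 / 2 < rL.
Hypothesis HrLU : rL < rU.
Hypothesis Hdiff : eta1 rU + 12 * eta1 (2 * rL) >= 0.

Lemma e1L_neg : eta1 (2 * rL) < 0.
Proof. apply H1b. lra. Qed.

Lemma e1U_pos : eta1 rU > 0.
Proof. pose proof e1L_neg. lra. Qed.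

Lemma rU_lt : rU < rt2.
Proof.
  destruct (Rle_dec rU rt1). lra. pose proof e1U_pos. pose proof (H1b rU). lra.
Qed.

Lemma eta1_decr x : rL <= x <= rU -> eta1 rU <= eta1 x.
Proof.
  intros Hx. pose proof rU_lt.
  destruct (mvt eta1 eta2 x rU) as [c [Hc E]]; try lra; auto.
  pose proof (H2a c). assert (eta2 c < 0) by (apply H2a; lra). nra.
Qed.

Lemma eta1_incr x : 2 * rL <= x -> eta1 (2 * rL) <= eta1 x.
Proof.
  intros Hx.
  destruct (mvt eta1 eta2 (2 * rL) x) as [c [Hc E]]; try lra; auto.
  assert (eta2 c > 0) by (apply H2b; lra). nra.
Qed.

Lemma slope1 x y : rL <= x <= y -> y <= rU -> eta y - eta x >= eta1 rU * (y - x).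
Proof.
  intros Hx Hy.
  destruct (mvt eta eta1 x y) as [c [Hc E]]; try lra; auto.
  pose proof (eta1_decr c). rewrite E. nra.
Qed.

Lemma slope2 u v : 2 * rL <= v <= u -> eta u - eta v >= eta1 (2 * rL) * (u - v).
Proof.
  intros Hv.
  destruct (mvt eta eta1 v u) as [c [Hc E]]; try lra; auto.
  pose proof (eta1_incr c). rewrite E. nra.
Qed.

Lemma slope3 u v : 2 * rL <= v <= u -> eta u <= eta v.
Proof.
  intros Hv.
  destruct (mvt eta eta1 v u) as [c [Hc E]]; try lra; auto.
  assert (eta1 c < 0) by (apply H1b; lra). nra.
Qed.

End Slopes.
Lemma F_first eta N K r : F_QCF eta N K r (- N)%Z = eta_hat eta (r (- N)%Z).
Proof. unfold F_QCF. rewrite Z.eqb_refl. reflexivity. Qed.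

Lemma F_last eta N K r : (0 < N)%Z -> F_QCF eta N K r (N + 1)%Z = - eta_hat eta (r N).
Proof.
  intros. unfold F_QCF. destruct (Z.eqb_spec (N+1) (-N)); [lia|].
  rewrite Z.eqb_refl. reflexivity.
Qed.

Lemma F_cont eta N K r j : j <> (- N)%Z -> j <> (N + 1)%Z -> ~ (- K + 1 <= j <= K)%Z ->
  F_QCF eta N K r j = eta_hat eta (r j) - eta_hat eta (r (j - 1)%Z).
Proof.
  intros H1 H2 H3. unfold F_QCF.
  destruct (Z.eqb_spec j (-N)); [lia|]. destruct (Z.eqb_spec j (N+1)); [lia|].
  destruct (Z.leb_spec (-K+1) j), (Z.leb_spec j K); simpl; try lia; reflexivity.
Qed.

Lemma F_atom eta N K r j : j <> (- N)%Z -> j <> (N + 1)%Z -> (- K + 1 <= j <= K)%Z ->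
  F_QCF eta N K r j = (eta (r j) + eta (r j + r (j + 1)%Z))
    - (eta (r (j - 1)%Z) + eta (r (j - 1)%Z + r (j - 2)%Z)).
Proof.
  intros H1 H2 H3. unfold F_QCF.
  destruct (Z.eqb_spec j (-N)); [lia|]. destruct (Z.eqb_spec j (N+1)); [lia|].
  destruct (Z.leb_spec (-K+1) j), (Z.leb_spec j K); simpl; try lia; reflexivity.
Qed.

Lemma F_sym eta N K r j : (0 < K)%Z -> (K < N - 1)%Z -> (forall k, r (- k)%Z = r k) ->
  (1 <= j <= N + 1)%Z -> F_QCF eta N K r j = - F_QCF eta N K r (1 - j)%Z.
Proof.
  intros HK HKN Hs Hj.
  destruct (Z.eq_dec j (N+1)).
  { subst. rewrite F_last by lia. replace (1 - (N+1))%Z with (-N)%Z by ring.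
    rewrite F_first, Hs. ring. }
  destruct (Z_le_dec j K).
  - rewrite !F_atom by lia.
    replace (1 - j)%Z with (- (j - 1))%Z by ring.
    replace (- (j - 1) + 1)%Z with (- (j - 2))%Z by ring.
    replace (- (j - 1) - 1)%Z with (- j)%Z by ring.
    replace (- (j - 1) - 2)%Z with (- (j + 1))%Z by ring.
    rewrite !Hs. ring.
  - rewrite !F_cont by lia.
    replace (1 - j)%Z with (- (j - 1))%Z by ring.
    replace (- (j - 1) - 1)%Z with (- j)%Z by ring.
    rewrite !Hs. ring.
Qed.

Lemma Phi_first N f : Phi N f (- N)%Z = - f (- N)%Z.
Proof.
  unfold Phi. replace (- N + N)%Z with 0%Z by ring. simpl. do 2 f_equal.
Qed.

Lemma Phi_step N f j : (- N < j)%Z -> Phi N f j = Phi N f (j - 1)%Z - f j.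
Proof.
  intros Hj. unfold Phi.
  assert (E : Z.to_nat (j + N) = S (Z.to_nat (j - 1 + N))) by lia.
  rewrite E, tech5.
  replace (Z.of_nat (S (Z.to_nat (j - 1 + N))) - N)%Z with j by lia. ring.
Qed.
Section Main.
Variables (eta : R -> R) (rL rU e1U e1L : R) (N K : Z) (P f : Z -> R).
Hypothesis HrL0 : 0 < rL.
Hypothesis HrLU : rL < rU.
Hypothesis S1 : forall x y, rL <= x <= y -> y <= rU -> eta y - eta x >= e1U * (y - x).
Hypothesis S2 : forall u v, 2 * rL <= v <= u -> eta u - eta v >= e1L * (u - v).
Hypothesis S3 : forall u v, 2 * rL <= v <= u -> eta u <= eta v.
Hypothesis He1L : e1L < 0.
Hypothesis Hm : e1U + 4 * e1L > 0.
Hypothesis Hcont : forall x, 0 < x -> continuity_pt eta x.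
Hypothesis HK : (0 < K)%Z.
Hypothesis HKN : (K < N - 1)%Z.
Hypothesis HP : forall j, (- N <= j <= N)%Z ->
  eta rL + 4 * eta (2 * rL) - 2 * eta (2 * rU) < P j /\
  P j < eta rU + 4 * eta (2 * rU) - 2 * eta (2 * rL).

Lemma S2' u v D : 2 * rL <= u -> 2 * rL <= v -> u - v <= D -> 0 <= D ->
  eta u - eta v >= e1L * D.
Proof.
  intros Hu Hv HD HD0. destruct (Rle_dec v u).
  - pose proof (S2 u v). nra.
  - pose proof (S3 v u). nra.
Qed.

Lemma cont_shift p y : 0 < y + p -> continuity_pt (fun y => eta (y + p)) y.
Proof.
  intros H. apply (continuity_pt_comp (fun y => y + p) eta).
  - apply lip_cont with 1; [lra|]. intro u. replace (u + p - (y + p)) with (u - y) by ring. lra.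
  - now apply Hcont.
Qed.

Lemma eta_hat_mono x y : rL <= x <= y -> y <= rU ->
  eta_hat eta y - eta_hat eta x >= (e1U + 4 * e1L) * (y - x).
Proof.
  intros Hx Hy. unfold eta_hat. pose proof (S1 x y Hx Hy).
  pose proof (S2 (2 * y) (2 * x) ltac:(lra)). nra.
Qed.

Lemma eta_hat_inj x y : rL <= x <= rU -> rL <= y <= rU -> eta_hat eta x = eta_hat eta y -> x = y.
Proof.
  intros Hx Hy E. destruct (Rtotal_order x y) as [H|[H|H]]; auto.
  - pose proof (eta_hat_mono x y ltac:(lra) ltac:(lra)). nra.
  - pose proof (eta_hat_mono y x ltac:(lra) ltac:(lra)). nra.
Qed.

Lemma rc_ex j : (- N <= j <= N)%Z -> exists y, rL < y < rU /\ eta_hat eta y = P j.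
Proof.
  intros Hj. destruct (HP j Hj) as [Hl Hu].
  pose proof (S3 (2 * rU) (2 * rL) ltac:(lra)).
  destruct (IVT_loc (eta_hat eta) rL rU (P j)) as [y [Hy E]]; [lra| | |].
  - intros x Hx. unfold eta_hat.
    apply (continuity_pt_plus eta (fun x => 2 * eta (2 * x))).
    + apply Hcont; lra.
    + apply (continuity_pt_scal (fun x => eta (2 * x))).
      apply (continuity_pt_comp (fun x => 2 * x) eta).
      * apply lip_cont with 2; [lra|]. intro u.
        replace (2 * u - 2 * x) with (2 * (u - x)) by ring. rewrite Rabs_mult, Rabs_right by lra. lra.
      * apply Hcont; lra.
  - unfold eta_hat. lra.
  - exists y. split; auto.
    destruct (Req_dec y rL). { subst. unfold eta_hat in E. lra. }
    destruct (Req_dec y rU). { subst. unfold eta_hat in E. lra. }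
    lra.
Qed.

Definition rc j := epsilon (inhabits 0) (fun y => rL < y < rU /\ eta_hat eta y = P j).

Lemma rc_spec j : (- N <= j <= N)%Z -> rL < rc j < rU /\ eta_hat eta (rc j) = P j.
Proof. intros Hj. unfold rc. apply epsilon_spec. now apply rc_ex. Qed.

Definition mir (k : Z) : Z := if (k <=? 0)%Z then k else (- k)%Z.
Definition ext (x : Z -> R) (k : Z) : R :=
  if (mir k <=? - K)%Z then rc (mir k) else x (mir k).
Definition G (r : Z -> R) (j : Z) : R :=
  eta (r j) + eta (r j + r (j + 1)%Z) + eta (r j + r (j - 1)%Z).
Definition inR j := (- K + 1 <= j <= 0)%Z.
Definition Bx (x : Z -> R) := forall j, inR j -> rL <= x j <= rU.
Definition upd (x : Z -> R) (j : Z) (y : R) : Z -> R := fun i => if (i =? j)%Z then y else x i.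

Lemma ext_bounds x : Bx x -> forall k, (- N <= k <= N)%Z -> rL <= ext x k <= rU.
Proof.
  intros Hx k Hk. unfold ext, mir.
  destruct (Z.leb_spec k 0); [destruct (Z.leb_spec k (-K)) | destruct (Z.leb_spec (-k) (-K))].
  all: first [ pose proof (rc_spec k ltac:(lia)); lra
             | pose proof (rc_spec (-k) ltac:(lia)); lra
             | apply Hx; unfold inR; lia ].
Qed.

Lemma ext_in x j : inR j -> ext x j = x j.
Proof.
  unfold inR, ext, mir. intros Hj.
  destruct (Z.leb_spec j 0); [|lia]. destruct (Z.leb_spec j (-K)); [lia|]. reflexivity.
Qed.

Lemma ext_diff x y M : 0 <= M -> (forall i, inR i -> x i - y i <= M) ->
  forall k, ext x k - ext y k <= M.
Proof.
  intros HM H k. unfold ext.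
  destruct (Z.leb_spec (mir k) (-K)).
  - lra.
  - apply H. unfold inR, mir in *. destruct (Z.leb_spec k 0); lia.
Qed.

Lemma ext_sym x k : ext x (- k)%Z = ext x k.
Proof.
  assert (E : mir (- k) = mir k) by (unfold mir; destruct (Z.leb_spec (-k) 0), (Z.leb_spec k 0); lia).
  unfold ext. now rewrite E.
Qed.

Lemma ext_upd_same x j y : inR j -> ext (upd x j y) j = y.
Proof. intros Hj. rewrite ext_in by auto. unfold upd. now rewrite Z.eqb_refl. Qed.

Lemma ext_upd_other x j y k : mir k <> j -> ext (upd x j y) k = ext x k.
Proof.
  intros H. unfold ext. destruct (_ <=? _)%Z; auto. unfold upd.
  destruct (Z.eqb_spec (mir k) j); [contradiction|auto].
Qed.

Lemma mir_p1 j : inR j -> mir (j + 1)%Z <> j.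
Proof. unfold inR, mir. intros. destruct (Z.leb_spec (j+1) 0); lia. Qed.
Lemma mir_m1 j : inR j -> mir (j - 1)%Z <> j.
Proof. unfold inR, mir. intros. destruct (Z.leb_spec (j-1) 0); lia. Qed.

Lemma G_cmp x y j M : Bx x -> Bx y -> inR j -> x j - y j = M -> 0 <= M ->
  (forall i, inR i -> x i - y i <= M) ->
  G (ext x) j - G (ext y) j >= (e1U + 4 * e1L) * M.
Proof.
  intros Bx_ By_ Hj HM HM0 Hd. unfold G. rewrite (ext_in x), (ext_in y) by auto.
  assert (Hj' : inR j) by auto. unfold inR in Hj'.
  pose proof (ext_bounds x Bx_ (j+1) ltac:(lia)).
  pose proof (ext_bounds y By_ (j+1) ltac:(lia)).
  pose proof (ext_bounds x Bx_ (j-1) ltac:(lia)).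
  pose proof (ext_bounds y By_ (j-1) ltac:(lia)).
  pose proof (ext_diff x y M HM0 Hd (j+1)).
  pose proof (ext_diff x y M HM0 Hd (j-1)).
  pose proof (Bx_ j Hj). pose proof (By_ j Hj).
  pose proof (S1 (y j) (x j) ltac:(lra) ltac:(lra)).
  pose proof (S2' (x j + ext x (j+1)%Z) (y j + ext y (j+1)%Z) (2 * M) ltac:(lra) ltac:(lra) ltac:(lra) ltac:(lra)).
  pose proof (S2' (x j + ext x (j-1)%Z) (y j + ext y (j-1)%Z) (2 * M) ltac:(lra) ltac:(lra) ltac:(lra) ltac:(lra)).
  subst M. lra.
Qed.

Definition cL := 2 * eta (2 * rU) - 2 * eta (2 * rL).
Definition cU := 2 * eta (2 * rL) - 2 * eta (2 * rU).

Lemma cLU : cL <= cU.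
Proof. unfold cL, cU. pose proof (S3 (2 * rU) (2 * rL) ltac:(lra)). lra. Qed.

Lemma Pc_bounds j c : inR j -> cL <= c <= cU ->
  eta rL + 2 * eta (2 * rL) < P j + c < eta rU + 2 * eta (2 * rU).
Proof.
  intros Hj Hc. unfold inR in Hj. destruct (HP j ltac:(lia)). unfold cL, cU in *. lra.
Qed.

Lemma G_at x j : inR j -> G (ext x) j = eta (x j) + eta (x j + ext x (j + 1)%Z) + eta (x j + ext x (j - 1)%Z).
Proof. intros. unfold G. now rewrite ext_in. Qed.

Lemma G_range x j : Bx x -> inR j ->
  eta (x j) + 2 * eta (2 * rU) <= G (ext x) j <= eta (x j) + 2 * eta (2 * rL).
Proof.
  intros Hx Hj. rewrite G_at by auto. assert (Hj' := Hj). unfold inR in Hj'.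
  pose proof (ext_bounds x Hx (j+1) ltac:(lia)).
  pose proof (ext_bounds x Hx (j-1) ltac:(lia)).
  pose proof (Hx j Hj).
  pose proof (S3 (x j + ext x (j+1)%Z) (2 * rL) ltac:(lra)).
  pose proof (S3 (x j + ext x (j-1)%Z) (2 * rL) ltac:(lra)).
  pose proof (S3 (2 * rU) (x j + ext x (j+1)%Z) ltac:(lra)).
  pose proof (S3 (2 * rU) (x j + ext x (j-1)%Z) ltac:(lra)).
  lra.
Qed.

Lemma sol_strict x j c : Bx x -> inR j -> cL <= c <= cU -> G (ext x) j = P j + c -> rL < x j < rU.
Proof.
  intros Hx Hj Hc E. pose proof (G_range x j Hx Hj). pose proof (Pc_bounds j c Hj Hc).
  pose proof (Hx j Hj).
  destruct (Req_dec (x j) rL) as [e|]. { rewrite e in *. lra. }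
  destruct (Req_dec (x j) rU) as [e|]. { rewrite e in *. lra. }
  lra.
Qed.

Lemma upd_B x j y : Bx x -> rL <= y <= rU -> Bx (upd x j y).
Proof. intros Hx Hy i Hi. unfold upd. destruct (Z.eqb_spec i j); auto. Qed.

Lemma T_ex x j c : Bx x -> inR j -> cL <= c <= cU ->
  exists y, rL <= y <= rU /\ G (ext (upd x j y)) j = P j + c.
Proof.
  intros Hx Hj Hc. assert (Hj' := Hj). unfold inR in Hj'.
  set (p := ext x (j + 1)%Z). set (q := ext x (j - 1)%Z).
  assert (E : forall y, G (ext (upd x j y)) j = eta y + eta (y + p) + eta (y + q)).
  { intro y. unfold G. rewrite ext_upd_same by auto.
    rewrite (ext_upd_other x j y (j+1)) by (now apply mir_p1).
    rewrite (ext_upd_other x j y (j-1)) by (now apply mir_m1). reflexivity. }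
  pose proof (ext_bounds x Hx (j+1) ltac:(lia)).
  pose proof (ext_bounds x Hx (j-1) ltac:(lia)).
  fold p q in H, H0.
  pose proof (Pc_bounds j c Hj Hc).
  destruct (IVT_loc (fun y => eta y + eta (y + p) + eta (y + q)) rL rU (P j + c)) as [y [Hy Ey]].
  - lra.
  - intros y Hy.
    apply (continuity_pt_plus (fun y => eta y + eta (y + p)) (fun y => eta (y + q))).
    apply (continuity_pt_plus eta (fun y => eta (y + p))).
    apply Hcont; lra. apply cont_shift; lra. apply cont_shift; lra.
  - simpl.
    pose proof (S3 (rL + p) (2 * rL) ltac:(lra)).
    pose proof (S3 (rL + q) (2 * rL) ltac:(lra)).
    pose proof (S3 (2 * rU) (rU + p) ltac:(lra)).
    pose proof (S3 (2 * rU) (rU + q) ltac:(lra)).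
    lra.
  - exists y. split; auto. rewrite E. exact Ey.
Qed.

Definition T c x j := epsilon (inhabits 0)
  (fun y => rL <= y <= rU /\ G (ext (upd x j y)) j = P j + c).

Lemma T_spec c x j : Bx x -> inR j -> cL <= c <= cU ->
  rL <= T c x j <= rU /\ G (ext (upd x j (T c x j))) j = P j + c.
Proof. intros. unfold T. apply epsilon_spec. now apply T_ex. Qed.

Lemma G_own x j y y' : Bx x -> inR j -> rL <= y -> y < y' -> y' <= rU ->
  G (ext (upd x j y)) j < G (ext (upd x j y')) j.
Proof.
  intros Hx Hj H1 H2 H3.
  pose proof (G_cmp (upd x j y') (upd x j y) j (y' - y)
    (upd_B x j y' Hx ltac:(lra)) (upd_B x j y Hx ltac:(lra)) Hj) as H.
  unfold upd at 1 2 in H. rewrite Z.eqb_refl in H.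
  assert (0 < (e1U + 4 * e1L) * (y' - y)) by (apply Rmult_lt_0_compat; lra).
  enough (G (ext (upd x j y')) j - G (ext (upd x j y)) j >= (e1U + 4 * e1L) * (y' - y)) by lra.
  apply H; auto; try lra.
  intros i Hi. unfold upd. destruct (Z.eqb_spec i j); lra.
Qed.

Lemma G_oth x x' j : Bx x -> Bx x' -> inR j -> (forall i, inR i -> x i <= x' i) -> x j = x' j ->
  G (ext x') j <= G (ext x) j.
Proof.
  intros Hx Hx' Hj Hle He.
  pose proof (G_cmp x x' j 0 Hx Hx' Hj ltac:(lra) ltac:(lra)) as H.
  enough (G (ext x) j - G (ext x') j >= (e1U + 4 * e1L) * 0) by lra.
  apply H. intros i Hi. specialize (Hle i Hi). lra.
Qed.

Lemma T_mono c x x' : cL <= c <= cU -> Bx x -> Bx x' -> (forall i, inR i -> x i <= x' i) ->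
  forall j, inR j -> T c x j <= T c x' j.
Proof.
  intros Hc Hx Hx' Hle j Hj.
  destruct (T_spec c x j Hx Hj Hc) as [B1 E1].
  destruct (T_spec c x' j Hx' Hj Hc) as [B2 E2].
  destruct (Rle_dec (T c x j) (T c x' j)) as [|Hn]; auto. exfalso.
  pose proof (G_own x' j (T c x' j) (T c x j) Hx' Hj ltac:(lra) ltac:(lra) ltac:(lra)).
  pose proof (G_oth (upd x j (T c x j)) (upd x' j (T c x j)) j
     (upd_B x j _ Hx B1) (upd_B x' j _ Hx' B1) Hj).
  assert (G (ext (upd x' j (T c x j))) j <= G (ext (upd x j (T c x j))) j).
  { apply H0. intros i Hi. unfold upd. destruct (Z.eqb_spec i j); [lra|auto].
    unfold upd. now rewrite Z.eqb_refl. }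
  lra.
Qed.

Lemma upd_same x j : upd x j (x j) = x.
Proof. apply functional_extensionality. intro i. unfold upd. destruct (Z.eqb_spec i j); now subst. Qed.

Lemma inner_ex c : cL <= c <= cU -> exists u, Bx u /\ forall j, inR j -> G (ext u) j = P j + c.
Proof.
  intros Hc.
  set (S := fun x => Bx x /\ forall j, inR j -> x j <= T c x j).
  set (E := fun j v => exists x, S x /\ v = x j).
  set (u := fun j => epsilon (inhabits 0) (is_lub (E j))).
  assert (S0 : S (fun _ => rL)).
  { split. intros j _; lra. intros j Hj. destruct (T_spec c (fun _ => rL) j) as [H _]; auto.
    intros i _; lra. lra. }
  assert (Hu : forall j, inR j -> is_lub (E j) (u j)).
  { intros j Hj. unfold u. apply epsilon_spec.
    destruct (completeness (E j)) as [l Hl].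
    - exists rU. intros v [x [[Bx_ _] ->]]. apply Bx_; auto.
    - exists rL. exists (fun _ => rL). split; auto.
    - exists l; auto. }
  assert (HuB : Bx u).
  { intros j Hj. split.
    - apply (proj1 (Hu j Hj)). exists (fun _ => rL). split; auto.
    - apply (proj2 (Hu j Hj)). intros v [x [[Bx_ _] ->]]. apply Bx_; auto. }
  assert (Hle : forall x, S x -> forall i, inR i -> x i <= u i).
  { intros x Sx i Hi. apply (proj1 (Hu i Hi)). exists x; auto. }
  assert (H1 : forall j, inR j -> u j <= T c u j).
  { intros j Hj. apply (proj2 (Hu j Hj)). intros v [x [Sx ->]].
    apply Rle_trans with (T c x j). apply (proj2 Sx); auto.
    apply T_mono; auto. apply (proj1 Sx). }
  assert (HTB : Bx (T c u)). { intros j Hj. apply (T_spec c u j); auto. }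
  assert (ST : S (T c u)). { split; auto. apply T_mono; auto. }
  assert (H2 : forall j, inR j -> T c u j <= u j).
  { intros j Hj. apply (proj1 (Hu j Hj)). exists (T c u); auto. }
  exists u. split; auto. intros j Hj.
  destruct (T_spec c u j HuB Hj Hc) as [_ Ej].
  assert (e : T c u j = u j) by (pose proof (H1 j Hj); pose proof (H2 j Hj); lra).
  rewrite e, upd_same in Ej. exact Ej.
Qed.

Lemma max_idx_gen (d : Z -> R) a : forall n : nat, exists j, (a <= j <= a + Z.of_nat n)%Z /\
  forall i, (a <= i <= a + Z.of_nat n)%Z -> d i <= d j.
Proof.
  induction n as [|n IH].
  - exists a. split; [lia|]. intros i Hi. replace i with a by lia. lra.
  - destruct IH as [j [Hj Hm']].
    destruct (Rle_dec (d j) (d (a + Z.of_nat (S n)))%Z).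
    + exists (a + Z.of_nat (S n))%Z. split; [lia|]. intros i Hi.
      destruct (Z.eq_dec i (a + Z.of_nat (S n))). subst; lra.
      pose proof (Hm' i ltac:(lia)). lra.
    + exists j. split; [lia|]. intros i Hi.
      destruct (Z.eq_dec i (a + Z.of_nat (S n))). subst; lra.
      apply Hm'; lia.
Qed.

Lemma max_idx (d : Z -> R) : exists j, inR j /\ forall i, inR i -> d i <= d j.
Proof.
  destruct (max_idx_gen d (- K + 1) (Z.to_nat (K - 1))) as [j [Hj H]].
  exists j. unfold inR. split; [lia|]. intros i Hi. apply H. lia.
Qed.

Lemma compare x y c1 c2 : Bx x -> Bx y ->
  (forall j, inR j -> G (ext x) j = P j + c1) -> (forall j, inR j -> G (ext y) j = P j + c2) ->
  forall i, inR i -> (e1U + 4 * e1L) * (x i - y i) <= Rmax 0 (c1 - c2).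
Proof.
  intros Hx Hy Ex Ey i Hi.
  destruct (max_idx (fun i => x i - y i)) as [j [Hj Hmx]]. simpl in Hmx.
  pose proof (Hmx i Hi).
  pose proof (Rmax_l 0 (c1 - c2)). pose proof (Rmax_r 0 (c1 - c2)).
  destruct (Rle_dec (x j - y j) 0).
  - nra.
  - pose proof (G_cmp x y j (x j - y j) Hx Hy Hj eq_refl ltac:(lra) Hmx) as HG.
    rewrite Ex, Ey in HG by auto. nra.
Qed.

Definition clampc c := clampR cL cU c.
Definition xs c := epsilon (inhabits (fun _ : Z => 0))
  (fun x => Bx x /\ forall j, inR j -> G (ext x) j = P j + clampc c).

Lemma xs_spec c : Bx (xs c) /\ forall j, inR j -> G (ext (xs c)) j = P j + clampc c.
Proof. unfold xs. apply epsilon_spec. apply inner_ex. apply clamp_in. apply cLU. Qed.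

Definition hh c := xs c (- K + 1)%Z.

Lemma inR0 : inR (- K + 1)%Z.
Proof. unfold inR; lia. Qed.

Lemma hh_lip c c' : (e1U + 4 * e1L) * Rabs (hh c - hh c') <= Rabs (c - c').
Proof.
  destruct (xs_spec c) as [B1 E1]. destruct (xs_spec c') as [B2 E2].
  pose proof (compare _ _ _ _ B1 B2 E1 E2 _ inR0) as H1.
  pose proof (compare _ _ _ _ B2 B1 E2 E1 _ inR0) as H2.
  pose proof (clamp_lip cL cU c c' cLU). fold (clampc c) (clampc c') in H.
  unfold hh. revert H1 H2 H. generalize (clampc c) (clampc c'). intros a b H1 H2 H.
  unfold Rmax in *. repeat destruct Rle_dec; unfold Rabs in *; repeat destruct Rcase_abs; nra.
Qed.

Lemma hh_B c : rL <= hh c <= rU.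
Proof. destruct (xs_spec c) as [B1 _]. apply B1, inR0. Qed.

Definition Cf t := - 2 * eta (2 * rc (- K)%Z) + eta (rc (- K)%Z + rc (- K - 1)%Z) + eta (rc (- K)%Z + t).
Definition gg c := c - Cf (hh c).

Lemma gg_cont c : continuity_pt gg c.
Proof.
  unfold gg, Cf.
  apply (continuity_pt_minus (fun c => c) (fun c => - 2 * eta (2 * rc (- K)%Z) + eta (rc (- K)%Z + rc (- K - 1)%Z) + eta (rc (- K)%Z + hh c))).
  apply continuity_pt_id.
  apply (continuity_pt_plus (fun _ => - 2 * eta (2 * rc (- K)%Z) + eta (rc (- K)%Z + rc (- K - 1)%Z)) (fun c => eta (rc (- K)%Z + hh c))).
  apply continuity_pt_const. intros a b; reflexivity.
  apply (continuity_pt_comp (fun c => rc (- K)%Z + hh c) eta).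
  - apply lip_cont with (/ (e1U + 4 * e1L)). apply Rinv_0_lt_compat; lra.
    intro u. pose proof (hh_lip u c).
    replace (rc (- K)%Z + hh u - (rc (- K)%Z + hh c)) with (hh u - hh c) by ring.
    apply Rmult_le_reg_l with (e1U + 4 * e1L). lra.
    rewrite <- Rmult_assoc, Rinv_r, Rmult_1_l by lra. exact H.
  - apply Hcont. pose proof (hh_B c). pose proof (rc_spec (- K) ltac:(lia)). lra.
Qed.

Lemma Cf_bounds t : rL <= t <= rU -> cL <= Cf t <= cU.
Proof.
  intros Ht. unfold Cf, cL, cU.
  pose proof (rc_spec (- K) ltac:(lia)) as [A _].
  pose proof (rc_spec (- K - 1) ltac:(lia)) as [B _].
  pose proof (S3 (2 * rc (- K)%Z) (2 * rL) ltac:(lra)).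
  pose proof (S3 (2 * rU) (2 * rc (- K)%Z) ltac:(lra)).
  pose proof (S3 (rc (- K)%Z + rc (- K - 1)%Z) (2 * rL) ltac:(lra)).
  pose proof (S3 (2 * rU) (rc (- K)%Z + rc (- K - 1)%Z) ltac:(lra)).
  pose proof (S3 (rc (- K)%Z + t) (2 * rL) ltac:(lra)).
  pose proof (S3 (2 * rU) (rc (- K)%Z + t) ltac:(lra)).
  lra.
Qed.

Lemma Cf_anti t t' : rL <= t -> t <= t' -> t' <= rU -> Cf t' <= Cf t.
Proof.
  intros. unfold Cf. pose proof (rc_spec (- K) ltac:(lia)) as [A _].
  pose proof (S3 (rc (- K)%Z + t') (rc (- K)%Z + t) ltac:(lra)). lra.
Qed.

Lemma outer_ex : exists c, cL <= c <= cU /\ gg c = 0.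
Proof.
  pose proof cLU.
  apply IVT_loc. exact cLU. intros; apply gg_cont.
  unfold gg. pose proof (Cf_bounds (hh cL) (hh_B cL)). pose proof (Cf_bounds (hh cU) (hh_B cU)). lra.
Qed.

Hypothesis HP0 : P (- N)%Z = - f (- N)%Z.
Hypothesis HPs : forall j, (- N < j <= N)%Z -> P j = P (j - 1)%Z - f j.
Hypothesis Hf : forall j : Z, (0 <= j <= N)%Z -> f (j + 1)%Z = - f (- j)%Z.

Lemma F_G r j : (eta (r j) + eta (r j + r (j + 1)%Z))
    - (eta (r (j - 1)%Z) + eta (r (j - 1)%Z + r (j - 2)%Z)) = G r j - G r (j - 1)%Z.
Proof.
  unfold G. replace (j - 1 + 1)%Z with j by ring. replace (j - 1 - 1)%Z with (j - 2)%Z by ring.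
  rewrite (Rplus_comm (r (j - 1)%Z) (r j)). ring.
Qed.

Lemma ext_strict x c : Bx x -> cL <= c <= cU -> (forall j, inR j -> G (ext x) j = P j + c) ->
  forall k, (- N <= k <= N)%Z -> rL < ext x k < rU.
Proof.
  intros Hx Hc E k Hk. unfold ext.
  assert (Hm1 : (- N <= mir k <= 0)%Z) by (unfold mir; destruct (Z.leb_spec k 0); lia).
  destruct (Z.leb_spec (mir k) (-K)).
  - apply (rc_spec (mir k) ltac:(lia)).
  - assert (inR (mir k)) by (unfold inR; lia).
    apply (sol_strict x (mir k) c); auto.
Qed.

Lemma main_sec : exists r : Z -> R,
    ((forall j : Z, (- N <= j <= N)%Z -> rL < r j < rU) /\
     symmetric_vec N r /\
     (forall j : Z, (- N <= j <= N + 1)%Z -> F_QCF eta N K r j + f j = 0)) /\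
    (forall r' : Z -> R,
       (forall j : Z, (- N <= j <= N)%Z -> rL < r' j < rU) ->
       symmetric_vec N r' ->
       (forall j : Z, (- N <= j <= N + 1)%Z -> F_QCF eta N K r' j + f j = 0) ->
       forall j : Z, (- N <= j <= N)%Z -> r' j = r j).
Proof.
  destruct outer_ex as [cs [Hcs Hg]].
  destruct (xs_spec cs) as [Bs Es].
  unfold clampc in Es. rewrite (clamp_id cL cU cs Hcs) in Es.
  set (xst := xs cs) in *.
  assert (Hcs' : cs = Cf (xst (- K + 1)%Z)) by (unfold gg, hh in Hg; fold xst in Hg; lra).
  assert (HrcK := rc_spec (- K) ltac:(lia)).
  assert (HrcK1 := rc_spec (- K - 1) ltac:(lia)).
  assert (EK : G (ext xst) (- K)%Z = P (- K)%Z + cs).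
  { unfold G. 
    assert (e1 : ext xst (- K)%Z = rc (- K)%Z) by (unfold ext, mir; destruct (Z.leb_spec (-K) 0); [|lia]; destruct (Z.leb_spec (-K) (-K)); [|lia]; reflexivity).
    assert (e2 : ext xst (- K - 1)%Z = rc (- K - 1)%Z) by (unfold ext, mir; destruct (Z.leb_spec (-K-1) 0); [|lia]; destruct (Z.leb_spec (-K-1) (-K)); [|lia]; reflexivity).
    replace (- K - 1)%Z with (- K - 1)%Z by ring.
    rewrite e1, e2, ext_in by apply inR0.
    rewrite Hcs'. unfold Cf. destruct HrcK as [_ E]. rewrite <- E. unfold eta_hat. ring. }
  assert (Eall : forall j, (- K <= j <= 0)%Z -> G (ext xst) j = P j + cs).
  { intros j Hj. destruct (Z.eq_dec j (-K)) as [e|]. rewrite e; exact EK. apply Es. unfold inR; lia. }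
  assert (Hleft : forall j, (- N <= j <= 0)%Z -> F_QCF eta N K (ext xst) j + f j = 0).
  { intros j Hj.
    destruct (Z.eq_dec j (-N)) as [e|].
    - rewrite e. rewrite F_first.
      assert (ext xst (- N)%Z = rc (- N)%Z) by (unfold ext, mir; destruct (Z.leb_spec (-N) 0); [|lia]; destruct (Z.leb_spec (-N) (-K)); [|lia]; reflexivity).
      rewrite H. destruct (rc_spec (- N) ltac:(lia)) as [_ ->]. rewrite HP0. ring.
    - destruct (Z_le_dec j (-K)).
      + rewrite F_cont by lia.
        assert (ext xst j = rc j) by (unfold ext, mir; destruct (Z.leb_spec j 0); [|lia]; destruct (Z.leb_spec j (-K)); [|lia]; reflexivity).
        assert (ext xst (j - 1)%Z = rc (j - 1)%Z) by (unfold ext, mir; destruct (Z.leb_spec (j-1) 0); [|lia]; destruct (Z.leb_spec (j-1) (-K)); [|lia]; reflexivity).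
        rewrite H, H0. destruct (rc_spec j ltac:(lia)) as [_ ->]. destruct (rc_spec (j-1) ltac:(lia)) as [_ ->].
        rewrite (HPs j) by lia. ring.
      + rewrite F_atom by lia. rewrite F_G. rewrite !Eall by lia.
        rewrite (HPs j) by lia. ring. }
  assert (Hsym : forall k, ext xst (- k)%Z = ext xst k) by (intro; apply ext_sym).
  exists (ext xst). split; [split; [|split]|].
  - intros j Hj. apply (ext_strict xst cs); auto.
  - intros j Hj. apply ext_sym.
  - intros j Hj. destruct (Z_le_dec j 0). apply Hleft; lia.
    rewrite F_sym by (auto; lia).
    assert (f j = - f (1 - j)%Z).
    { pose proof (Hf (j - 1) ltac:(lia)). replace (j - 1 + 1)%Z with j in H by ring.
      replace (- (j - 1))%Z with (1 - j)%Z in H by ring. exact H. }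
    rewrite H. pose proof (Hleft (1 - j)%Z ltac:(lia)). lra.
  - intros r' Hb' Hs' He'.
    assert (C1 : forall n : nat, (Z.of_nat n <= N - K)%Z -> eta_hat eta (r' (- N + Z.of_nat n)%Z) = P (- N + Z.of_nat n)%Z).
    { induction n as [|n IH]; intros Hn.
      - replace (- N + Z.of_nat 0)%Z with (- N)%Z by lia.
        pose proof (He' (- N)%Z ltac:(lia)). rewrite F_first in H. rewrite HP0. lra.
      - set (j := (- N + Z.of_nat (S n))%Z).
        pose proof (He' j ltac:(lia)). rewrite F_cont in H by lia.
        replace (j - 1)%Z with (- N + Z.of_nat n)%Z in H by lia.
        rewrite IH in H by lia. rewrite (HPs j) by lia.
        replace (j - 1)%Z with (- N + Z.of_nat n)%Z by lia. lra. }
    assert (C1' : forall k, (- N <= k <= - K)%Z -> r' k = rc k).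
    { intros k Hk. pose proof (C1 (Z.to_nat (k + N)) ltac:(lia)).
      replace (- N + Z.of_nat (Z.to_nat (k + N)))%Z with k in H by lia.
      destruct (rc_spec k ltac:(lia)) as [Hr Er]. pose proof (Hb' k ltac:(lia)).
      apply eta_hat_inj; lra. }
    set (c' := G r' (- K)%Z - P (- K)%Z).
    assert (C2 : forall n : nat, (Z.of_nat n <= K)%Z -> G r' (- K + Z.of_nat n)%Z = P (- K + Z.of_nat n)%Z + c').
    { induction n as [|n IH]; intros Hn.
      - replace (- K + Z.of_nat 0)%Z with (- K)%Z by lia. unfold c'. ring.
      - set (j := (- K + Z.of_nat (S n))%Z).
        pose proof (He' j ltac:(lia)). rewrite F_atom in H by lia. rewrite F_G in H.
        replace (j - 1)%Z with (- K + Z.of_nat n)%Z in H by lia.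
        rewrite IH in H by lia. rewrite (HPs j) by lia.
        replace (j - 1)%Z with (- K + Z.of_nat n)%Z by lia. lra. }
    assert (C2' : forall j, inR j -> G r' j = P j + c').
    { intros j Hj. unfold inR in Hj. pose proof (C2 (Z.to_nat (j + K)) ltac:(lia)).
      replace (- K + Z.of_nat (Z.to_nat (j + K)))%Z with j in H by lia. exact H. }
    assert (Hr1 : r' 1%Z = r' (-1)%Z) by (symmetry; apply (Hs' 1%Z); lia).
    assert (C3 : forall k, (- N <= k <= 1)%Z -> ext r' k = r' k).
    { intros k Hk. unfold ext, mir. destruct (Z.leb_spec k 0).
      - destruct (Z.leb_spec k (-K)). symmetry; apply C1'; lia. reflexivity.
      - assert (k = 1%Z) by lia. subst k. rewrite Hr1.
        destruct (Z.leb_spec (-(1)) (-K)). symmetry; apply C1'; lia. reflexivity. }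
    assert (Br' : Bx r') by (intros j Hj; unfold inR in Hj; pose proof (Hb' j ltac:(lia)); lra).
    assert (C4 : forall j, inR j -> G (ext r') j = P j + c').
    { intros j Hj. rewrite <- C2' by auto. unfold G. unfold inR in Hj.
      rewrite !C3 by lia. reflexivity. }
    assert (Hc' : c' = Cf (r' (- K + 1)%Z)).
    { unfold c', G, Cf. rewrite (C1' (- K)%Z) by lia. rewrite (C1' (- K - 1)%Z) by lia.
      destruct HrcK as [_ E]. rewrite <- E. unfold eta_hat. ring. }
    pose proof (Br' _ inR0) as Br0. pose proof (Bs _ inR0) as Bs0.
    assert (Hcc : c' = cs).
    { destruct (Rle_dec c' cs).
      - pose proof (compare r' xst c' cs Br' Bs C4 Es _ inR0).
        rewrite Rmax_left in H by lra.
        assert (r' (- K + 1)%Z <= xst (- K + 1)%Z) by nra.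
        pose proof (Cf_anti (r' (- K + 1)%Z) (xst (- K + 1)%Z) ltac:(lra) H0 ltac:(lra)). lra.
      - pose proof (compare xst r' cs c' Bs Br' Es C4 _ inR0).
        rewrite Rmax_left in H by lra.
        assert (xst (- K + 1)%Z <= r' (- K + 1)%Z) by nra.
        pose proof (Cf_anti (xst (- K + 1)%Z) (r' (- K + 1)%Z) ltac:(lra) H0 ltac:(lra)). lra. }
    assert (Heq : forall i, inR i -> r' i = xst i).
    { intros i Hi. pose proof (compare r' xst c' cs Br' Bs C4 Es _ Hi).
      pose proof (compare xst r' cs c' Bs Br' Es C4 _ Hi).
      rewrite Hcc, Rminus_diag, Rmax_left in H, H0 by lra. nra. }
    assert (Hle0 : forall j, (- N <= j <= 0)%Z -> r' j = ext xst j).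
    { intros j Hj. destruct (Z_le_dec j (-K)).
      - rewrite C1' by lia. unfold ext, mir. destruct (Z.leb_spec j 0); [|lia].
        destruct (Z.leb_spec j (-K)); [reflexivity|lia].
      - rewrite ext_in by (unfold inR; lia). apply Heq. unfold inR; lia. }
    intros j Hj. destruct (Z_le_dec j 0). apply Hle0; lia.
    rewrite <- (Hs' j) by lia. rewrite <- ext_sym. apply Hle0; lia.
Qed.

End Main.

Theorem corollary4p6
  (phi eta eta1 eta2 : R -> R)
  (* phi in C^3((0,oo)), eta = phi', eta1 = eta', eta2 = eta'' *)
  (Hphi : forall x, 0 < x -> is_derive phi x (eta x))
  (Heta : forall x, 0 < x -> is_derive eta x (eta1 x))
  (Heta1 : forall x, 0 < x -> is_derive eta1 x (eta2 x))
  (Heta2c : forall x, 0 < x -> continuous eta2 x)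
  (a0 rt1 rt2 a1 : R)
  (Hconst : 0 < a0 /\ a0 < rt1 /\ rt1 < rt2 /\ rt2 < 2 * a0)
  (Ha1 : a0 < a1)
  (H1a : forall x, 0 < x < rt1 -> eta1 x > 0)
  (H1b : forall x, x > rt1 -> eta1 x < 0)
  (H2a : forall x, 0 < x < rt2 -> eta2 x < 0)
  (H2b : forall x, x > rt2 -> eta2 x > 0)
  (H3a : forall x, 0 < x < a0 -> eta_hat eta x < 0)
  (H3b : forall x, x > a0 -> eta_hat eta x > 0)
  (* hat eta'(r) = eta'(r) + 4 eta'(2r) *)
  (H4a : forall x, 0 < x < a1 -> eta1 x + 4 * eta1 (2 * x) > 0)
  (H4b : forall x, x > a1 -> eta1 x + 4 * eta1 (2 * x) < 0)
  (N K : Z) (HK : (0 < K)%Z) (HKN : (K < N - 1)%Z)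
  (f : Z -> R)
  (Hf : forall j : Z, (0 <= j <= N)%Z -> f (j + 1)%Z = - f (- j)%Z)
  (rL rU : R)
  (HrL : rt2 / 2 < rL) (HrLU : rL < rU)
  (Hdiff : eta1 rU + 12 * eta1 (2 * rL) >= 0)
  (HPhi : forall j : Z, (- N <= j <= N)%Z ->
     eta rL + 4 * eta (2 * rL) - 2 * eta (2 * rU) < Phi N f j /\
     Phi N f j < eta rU + 4 * eta (2 * rU) - 2 * eta (2 * rL)) :
  exists r : Z -> R,
    ((forall j : Z, (- N <= j <= N)%Z -> rL < r j < rU) /\
     symmetric_vec N r /\
     (forall j : Z, (- N <= j <= N + 1)%Z -> F_QCF eta N K r j + f j = 0)) /\
    (forall r' : Z -> R,
       (forall j : Z, (- N <= j <= N)%Z -> rL < r' j < rU) ->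
       symmetric_vec N r' ->
       (forall j : Z, (- N <= j <= N + 1)%Z -> F_QCF eta N K r' j + f j = 0) ->
       forall j : Z, (- N <= j <= N)%Z -> r' j = r j).
Proof.
  destruct Hconst as (Ha0 & Ha01 & Hr12 & Hr2).
  assert (Hrt : 0 < rt1 < rt2) by lra.
  assert (HrL0 : 0 < rL) by lra.
  pose proof (e1L_neg eta1 rt1 rt2 rL H1b Hrt HrL) as He1L.
  apply (main_sec eta rL rU (eta1 rU) (eta1 (2 * rL)) N K (Phi N f) f).
  all: try assumption.
  - intros x y Hx Hy. apply (slope1 eta eta1 eta2 rt1 rt2 rL rU); auto.
  - intros u v Huv. apply (slope2 eta eta1 eta2 rt1 rt2 rL); auto.
  - intros u v Huv. apply (slope3 eta eta1 rt1 rt2 rL); auto.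
  - lra.
  - intros x Hx. apply cont_of_derive with eta1. auto.
  - apply Phi_first.
  - intros j Hj. apply Phi_step. lia.
Qed.
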